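(* Let $n\ge 3$ be odd and $k\ge 3$. Then every Jenga-like configuration $Q$ of the $(n,k)$-game satisfies $$ g(Q)\le \frac{n(n-1)(k-2)}{2}. $$
   Context: The $(n,k)$-game is played with $nk$ blocks, each a box of length $n$, width $1$, height $1$. Level $i$ occupies heights $[i-1,i]$ and has $n$ slots $j=1,\dots,n$; a block in slot $j$ of an odd level $i$ is $[0,n]\times[j-1,j]\times[i-1,i]$, and of an even level $i$ is $[j-1,j]\times[0,n]\times[i-1,i]$. The initial configuration has $k$ full levels. A move removes exactly one block from a level which is not the topmost level and, when the topmost level is incomplete (fewer than $n$ blocks), is not the level immediately below the topmost level, and places it in an empty slot of the topmost level if that level is incomplete, or in a slot of a new level on top otherwise. A Jenga-like configuration is one obtainable from the initial configuration by finitely many moves in which every level up to the topmost contains at least one block. $g(Q)$ is the genus of the boundary surface of the union of the blocks of $Q$ (a connected closed polyhedral surface). *)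

(* Defs.v *)
From mathcomp Require Import all_boot all_order all_algebra.
Set Implicit Arguments. Unset Strict Implicit. Unset Printing Implicit Defensive.
Import Order.TTheory GRing.Theory Num.Theory.

(* A configuration of the (n,k)-game: the list of levels, bottom first
   (list index l = level l+1); a level is the set of its occupied slots,
   slot s : 'I_n being slot j = s+1 of the paper. *)
Definition config (n : nat) := seq {set 'I_n}.

Definition initial (n k : nat) : config n := nseq k [set: 'I_n].

Definition top_level n (c : config n) : {set 'I_n} := last set0 c.

Definition move n (c c' : config n) : Prop :=
  exists (i : nat) (j : 'I_n),
    [/\ i.+1 < size c,
        #|top_level c| < n -> i.+2 < size c,
        j \in nth set0 c i &
        let c1 := set_nth set0 c i (nth set0 c i :\ j) in
        if #|top_level c| < n then
          exists s : 'I_n, s \notin top_level c /\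
            c' = set_nth set0 c1 (size c).-1 (s |: top_level c)
        else exists s : 'I_n, c' = rcons c1 [set s]].

Inductive reachable n (k : nat) : config n -> Prop :=
| reach_init : reachable k (initial n k)
| reach_step c c' : reachable k c -> move c c' -> reachable k c'.

Definition jenga_like n (k : nat) (Q : config n) : Prop :=
  reachable k Q /\ all (fun L => L != set0) Q.

Local Open Scope ring_scope.

(* The unit cube [x,x+1]x[y,y+1]x[z,z+1] is contained in the union of blocks.
   Level with 0-based index z (paper level z+1): if z+1 is odd, a block in slot
   s is [0,n]x[s,s+1]x[z,z+1]; if even, [s,s+1]x[0,n]x[z,z+1]. *)
Definition occ n (Q : config n) (x y z : int) : bool :=
  [&& 0 <= z, z < (size Q)%:Z, 0 <= x, x < n%:Z, 0 <= y, y < n%:Z &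
   let L := nth set0 Q `|z|%N in
   if ~~ odd `|z|%N then [exists s in L, (nat_of_ord s)%:Z == y]
   else [exists s in L, (nat_of_ord s)%:Z == x]].

(* Boundary cell complex of the union of cubes: the boundary surface is the
   union of the unit squares separating an occupied from an empty cube. *)
Definition allsame (s : seq bool) : bool := all id s || all negb s.

Definition bvert n (Q : config n) (x y z : int) : bool :=
  ~~ allsame [seq occ Q (x - a.1.1%:Z) (y - a.1.2%:Z) (z - a.2%:Z)
             | a <- [:: (0,0,0); (0,0,1); (0,1,0); (0,1,1);
                        (1,0,0); (1,0,1); (1,1,0); (1,1,1)]%N].

(* edges from (x,y,z) to (x,y,z)+e_axis, axis = 0,1,2 *)
Definition bedge n (Q : config n) (axis : nat) (x y z : int) : bool :=
  ~~ allsame [seq (match axis with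
                    | 0%N => occ Q x (y - a.1%:Z) (z - a.2%:Z)
                    | 1%N => occ Q (x - a.1%:Z) y (z - a.2%:Z)
                    | _ => occ Q (x - a.1%:Z) (y - a.2%:Z) z end)
             | a <- [:: (0,0); (0,1); (1,0); (1,1)]%N].

(* unit squares perpendicular to axis, with minimal corner (x,y,z) *)
Definition bface n (Q : config n) (axis : nat) (x y z : int) : bool :=
  match axis with
  | 0%N => occ Q (x - 1) y z != occ Q x y z
  | 1%N => occ Q x (y - 1) z != occ Q x y z
  | _ => occ Q x y (z - 1) != occ Q x y z
  end.

(* all relevant grid coordinates lie in [0, B) with B = n + size Q + 1 *)
Definition gridcount n (Q : config n) (P : int -> int -> int -> bool) : nat :=
  let B := (n + size Q).+1 in
  (\sum_(x < B) \sum_(y < B) \sum_(z < B) P x%:Z y%:Z z%:Z)%N.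

Definition nV n (Q : config n) : nat := gridcount Q (bvert Q).
Definition nE n (Q : config n) : nat :=
  (gridcount Q (bedge Q 0) + gridcount Q (bedge Q 1) + gridcount Q (bedge Q 2))%N.
Definition nF n (Q : config n) : nat :=
  (gridcount Q (bface Q 0) + gridcount Q (bface Q 1) + gridcount Q (bface Q 2))%N.

(* Euler characteristic of the boundary surface, and its genus
   (for a connected closed orientable surface, chi = 2 - 2g). *)
Definition euler_char n (Q : config n) : int := (nV Q)%:Z - (nE Q)%:Z + (nF Q)%:Z.

Definition genus n (Q : config n) : int := ((2 - euler_char Q) %/ 2)%Z.

(* Main.v *)
Require Import Defs.
From mathcomp Require Import all_boot all_order all_algebra.
From mathcomp Require Import zify ring lra.
Import Order.TTheory GRing.Theory Num.Theory.
Set Implicit Arguments. Unset Strict Implicit. Unset Printing Implicit Defensive.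

Definition ssum n (c : config n) m : nat := \sum_(z < m) #|nth set0 c z|.

Definition Inv n k (c : config n) : Prop :=
  [/\ 3 <= size c, ssum c (size c) = n * k, nth set0 c (size c - 2) = setT
    & ssum c (size c - 3) <= n * (k - 2)].

Lemma ssumS n (c : config n) m : ssum c m.+1 = ssum c m + #|nth set0 c m|.
Proof. by rewrite /ssum big_ord_recr. Qed.

Lemma ssum_set_nth n (c : config n) i X m :
  ssum (set_nth set0 c i X) m + (i < m) * #|nth set0 c i|
  = ssum c m + (i < m) * #|X|.
Proof.
elim: m => [|m IH]; first by rewrite /ssum !big_ord0.
rewrite !ssumS nth_set_nth /=; move: IH.
case: (ltngtP m i) => [lt|gt|->].
- have -> : (i < m.+1) = false by apply/negbTE; lia.
  rewrite /= !mul0n; lia.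
- have -> : (i < m.+1) = true by apply/idP; lia.
  rewrite /= !mul1n; lia.
- rewrite ltnSn /= !mul0n !mul1n; lia.
Qed.

Lemma ssum_rcons n (c : config n) X m : m <= size c -> ssum (rcons c X) m = ssum c m.
Proof.
move=> hm; rewrite /ssum; apply: eq_bigr => z _.
by rewrite nth_rcons (leq_trans (ltn_ord z) hm).
Qed.

Lemma ssum_rcons_full n (c : config n) X :
  ssum (rcons c X) (size c).+1 = ssum c (size c) + #|X|.
Proof. by rewrite ssumS ssum_rcons // nth_rcons ltnn eqxx. Qed.

Lemma full_top n (A : {set 'I_n}) : ~~ (#|A| < n) -> A = setT.
Proof.
move=> h; apply/eqP; rewrite eqEcard subsetT cardsT card_ord.
by rewrite leqNgt.
Qed.

Lemma Inv_init n k : 3 <= k -> Inv k (initial n k).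
Proof.
move=> hk; rewrite /Inv /initial size_nseq.
have hs : forall m, m <= k -> ssum (nseq k [set: 'I_n]) m = m * n.
  move=> m hm; rewrite /ssum (eq_bigr (fun _ => n)).
    by rewrite sum_nat_const card_ord.
  move=> z _; rewrite nth_nseq (leq_trans (ltn_ord z) hm) cardsT card_ord //.
split => //.
- by rewrite hs // mulnC.
- by rewrite nth_nseq; have -> : k - 2 < k by lia.
- rewrite hs; last by lia.
  nia.
Qed.

Lemma Inv_move n k (c c' : config n) : Inv k c -> move c c' -> Inv k c'.
Proof.
move=> [hs htot htop hpre] [i [j [hi hinc hj hmv]]].
move: hmv => /=.
set L := nth set0 c i.
set c1 := set_nth set0 c i (L :\ j).
have sz1 : size c1 = size c.
  by rewrite size_set_nth; apply/maxn_idPr; lia.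
have sum1 := ssum_set_nth c i (L :\ j).
rewrite -/c1 in sum1.
have cardD : #|L| = (#|L :\ j|).+1 by rewrite (cardsD1 j L) hj.
have nth1 : forall z, z != i -> nth set0 c1 z = nth set0 c z.
  by move=> z hz; rewrite nth_set_nth /= (negbTE hz).
have topE : top_level c = nth set0 c (size c).-1 by rewrite /top_level nth_last.
case: ifP => htopc.
- move=> [s [hs' ->]].
  have hi2 := hinc htopc.
  set T := top_level c in hs' htopc *.
  have sz2 : size (set_nth set0 c1 (size c).-1 (s |: T)) = size c.
    by rewrite size_set_nth sz1; apply/maxn_idPr; lia.
  have sum2 := ssum_set_nth c1 (size c).-1 (s |: T).
  have e1 : nth set0 c1 (size c).-1 = T by rewrite nth1 ?topE //; apply/eqP; lia.
  rewrite e1 in sum2.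
  have cardU : #|s |: T| = (#|T|).+1 by rewrite cardsU1 hs'.
  split; rewrite sz2 //.
  + have := sum2 (size c); have := sum1 (size c).
    have -> : (i < size c) = true by apply/idP; lia.
    have -> : ((size c).-1 < size c) = true by apply/idP; lia.
    rewrite /= ?mul1n ?mul0n -/L htot cardD cardU => h1 h2; set u := #|L :\ j| in h1 h2 *; set v := #|T| in h1 h2 *; lia.
  + rewrite nth_set_nth /=.
    have -> : (size c - 2 == (size c).-1) = false by apply/negbTE; apply/eqP; lia.
    by rewrite nth1 //; apply/eqP; lia.
  + have := sum2 (size c - 3); have := sum1 (size c - 3).
    have -> : ((size c).-1 < size c - 3) = false by apply/negbTE; lia.
    rewrite /= ?mul1n ?mul0n -/L cardD; case: (i < size c - 3); rewrite /= ?mul1n ?mul0n => h1 h2;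
    set u := #|L :\ j| in h1 h2 *; lia.
- move=> [s ->].
  have Tfull : nth set0 c (size c).-1 = setT by rewrite -topE; apply: full_top; rewrite htopc.
  split; rewrite size_rcons.
  + lia.
  + rewrite ssum_rcons_full cards1 sz1.
    have := sum1 (size c).
    have -> : (i < size c) = true by apply/idP; lia.
    rewrite /= ?mul1n ?mul0n -/L cardD => h1; set u := #|L :\ j| in h1 *; lia.
  + rewrite sz1; have -> : (size c).+1 - 2 = (size c).-1 by lia.
    rewrite nth_rcons sz1.
    have -> : ((size c).-1 < size c) = true by apply/idP; lia.
    by rewrite nth1 //; apply/eqP; lia.
  + rewrite sz1; have -> : (size c).+1 - 3 = size c - 2 by lia.
    rewrite ssum_rcons; last by rewrite sz1; lia.
    have := sum1 (size c - 2).
    have hc : size c = (size c - 2).+2 by lia.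
    move: htot; rewrite {1}hc !ssumS.
    have -> : (size c - 2).+1 = (size c).-1 by lia.
    rewrite Tfull htop cardsT card_ord mulnBr.
    rewrite -/L cardD; case: (i < size c - 2); rewrite /= ?mul1n ?mul0n => h1 h2;
    set u := #|L :\ j| in h1 h2 *; set N := n * k in h1 *; lia.
Qed.

Lemma reach_Inv n k (c : config n) : 3 <= k -> reachable k c -> Inv k c.
Proof.
move=> hk; elim => [|c0 c1 _ IH hm]; first exact: Inv_init.
exact: Inv_move IH hm.
Qed.

Local Open Scope ring_scope.

Definition b2z (b : bool) : int := (nat_of_bool b)%:Z.

Definition Gb (b000 b001 b010 b011 b100 b101 b110 b111 : bool) : int :=
  b2z (~~ allsame [:: b000; b001; b010; b011; b100; b101; b110; b111])
  - ((~~ allsame [:: b000; b001; b010; b011]) + (~~ allsame [:: b000; b001; b100; b101])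
      + (~~ allsame [:: b000; b010; b100; b110]))%N%:Z
  + ((b100 != b000) + (b010 != b000) + (b001 != b000))%N%:Z.

Definition Psi n (Q : config n) (x y z : int) : int :=
  (bvert Q x y z)%:Z - (bedge Q 0 x y z + bedge Q 1 x y z + bedge Q 2 x y z)%N%:Z
  + (bface Q 0 x y z + bface Q 1 x y z + bface Q 2 x y z)%N%:Z.

Lemma subz0 (x : int) : x - 0%:Z = x. Proof. by rewrite subr0. Qed.
Lemma subz1 (x : int) : x - 1%:Z = x - 1. Proof. by []. Qed.

Lemma Psi_Gb n (Q : config n) x y z :
  Psi Q x y z = Gb (occ Q x y z) (occ Q x y (z-1)) (occ Q x (y-1) z) (occ Q x (y-1) (z-1))
     (occ Q (x-1) y z) (occ Q (x-1) y (z-1)) (occ Q (x-1) (y-1) z) (occ Q (x-1) (y-1) (z-1)).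
Proof.
rewrite /Psi /Gb /bvert /bedge /bface /= !subz0 !subz1. by [].
Qed.

Lemma PoszS I (r : seq I) P (F : I -> nat) :
  ((\sum_(i <- r | P i) F i)%N)%:Z = \sum_(i <- r | P i) (F i)%:Z.
Proof. exact: (big_morph Posz PoszD (erefl _)). Qed.

Lemma euler_Psi n (Q : config n) :
  euler_char Q = \sum_(x < (n + size Q).+1) \sum_(y < (n + size Q).+1) \sum_(z < (n + size Q).+1)
     Psi Q x%:Z y%:Z z%:Z.
Proof.
rewrite /euler_char /nV /nE /nF /gridcount /Psi.
set B := (n + size Q).+1.
have sp3 : forall (f g h : int -> int -> int -> nat),
  (\sum_(x < B) \sum_(y < B) \sum_(z < B) f x%:Z y%:Z z%:Z
  + \sum_(x < B) \sum_(y < B) \sum_(z < B) g x%:Z y%:Z z%:Z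
  + \sum_(x < B) \sum_(y < B) \sum_(z < B) h x%:Z y%:Z z%:Z)%N
  = (\sum_(x < B) \sum_(y < B) \sum_(z < B) (f x%:Z y%:Z z%:Z + g x%:Z y%:Z z%:Z + h x%:Z y%:Z z%:Z))%N.
  by move=> f g h; rewrite -!big_split /=; apply: eq_bigr => x _; rewrite -!big_split /=;
    apply: eq_bigr => y _; rewrite -!big_split.
rewrite (sp3 (fun x y z => bedge Q 0 x y z) (fun x y z => bedge Q 1 x y z) (fun x y z => bedge Q 2 x y z)).
rewrite (sp3 (fun x y z => bface Q 0 x y z) (fun x y z => bface Q 1 x y z) (fun x y z => bface Q 2 x y z)).
rewrite !PoszS -!sumrB -!big_split /=.
apply: eq_bigr => x _; rewrite !PoszS -!sumrB -!big_split /=.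
apply: eq_bigr => y _; rewrite !PoszS -!sumrB -!big_split /=.
by apply: eq_bigr => z _.
Qed.

Definition memZ n (A : {set 'I_n}) (x : int) : bool :=
  [exists s in A, (nat_of_ord s)%:Z == x].
Definition Lz n (Q : config n) (z : int) : {set 'I_n} :=
  if z < 0 then set0 else nth set0 Q `|z|%N.
Definition LX n (Q : config n) (z : int) : {set 'I_n} :=
  if odd `|z|%N then Lz Q z else setT.
Definition LY n (Q : config n) (z : int) : {set 'I_n} :=
  if odd `|z|%N then setT else Lz Q z.

Lemma memZ0 n (x : int) : memZ (set0 : {set 'I_n}) x = false.
Proof. by apply/existsP => -[s]; rewrite inE. Qed.

Lemma memZ_range n (A : {set 'I_n}) x : memZ A x -> (0 <= x) && (x < n%:Z).
Proof. by case/existsP => s /andP[_ /eqP <-]; rewrite ltz_nat ltn_ord andbT. Qed.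

Lemma memZT n (x : int) : memZ (setT : {set 'I_n}) x = (0 <= x) && (x < n%:Z).
Proof.
apply/idP/idP; first exact: memZ_range.
case: x => // m /=; rewrite ltz_nat => lt.
by apply/existsP; exists (Ordinal lt); rewrite inE /=.
Qed.

Lemma occ_prod n (Q : config n) x y z :
  occ Q x y z = memZ (LX Q z) x && memZ (LY Q z) y.
Proof.
rewrite /occ /LX /LY /Lz.
case: z => [m|m] /=; first last.
  by case: (odd m); rewrite /= ?memZ0 ?andbF.
rewrite ltz_nat; case: (ltnP m (size Q)) => hm /=; last first.
  by rewrite nth_default //; case: (odd m); rewrite /= memZ0 ?andbF.
case: (odd m) => /=.
- rewrite memZT; case hx: (memZ _ x).
    move: (memZ_range hx) => /andP[-> ->]; move: hx; rewrite /memZ => ->.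
    by case: (0 <= y); case: (y < n%:Z).
  by move: hx; rewrite /memZ => ->; rewrite !andbF.
- rewrite memZT; case hy: (memZ _ y).
    move: (memZ_range hy) => /andP[-> ->]; move: hy; rewrite /memZ => ->.
    by case: (0 <= x); case: (x < n%:Z).
  by move: hy; rewrite /memZ => ->; rewrite !andbF.
Qed.

Definition S4 := (bool * bool * bool * bool)%type.
Definition G (al be : S4) : int :=
  Gb (al.2 && be.2) (al.1.1.2 && be.1.1.2) (al.2 && be.1.2) (al.1.1.2 && be.1.1.1)
     (al.1.2 && be.2) (al.1.1.1 && be.1.1.2) (al.1.2 && be.1.2) (al.1.1.1 && be.1.1.1).
Definition st n (A1 A2 : {set 'I_n}) (x : int) : S4 :=
  (memZ A1 (x - 1), memZ A1 x, memZ A2 (x - 1), memZ A2 x).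

Lemma Psi_G n (Q : config n) x y z :
  Psi Q x y z = G (st (LX Q (z - 1)) (LX Q z) x) (st (LY Q (z - 1)) (LY Q z) y).
Proof. by rewrite Psi_Gb !occ_prod. Qed.

Definition a n (A : {set 'I_n}) (m : nat) : bool := memZ A m%:Z.

Lemma st0 n (A1 A2 : {set 'I_n}) : st A1 A2 0 = (false, a A1 0, false, a A2 0).
Proof.
rewrite /st /a; case: (boolP (memZ A1 _)) => [/memZ_range//|_].
by case: (boolP (memZ A2 _)) => [/memZ_range//|_].
Qed.

Lemma stS n (A1 A2 : {set 'I_n}) m :
  st A1 A2 m.+1%:Z = (a A1 m, a A1 m.+1, a A2 m, a A2 m.+1).
Proof.
by rewrite /st /a -addn1 PoszD addrK.
Qed.

Lemma a_out n (A : {set 'I_n}) m : (n <= m)%N -> a A m = false.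
Proof.
move=> h; apply/negbTE/negP => /memZ_range/andP[_]; rewrite ltz_nat.
by rewrite ltnNge h.
Qed.

Lemma aT n m : a (setT : {set 'I_n}) m = (m < n)%N.
Proof. by rewrite /a memZT ltz_nat. Qed.

Lemma a0 n m : a (set0 : {set 'I_n}) m = false.
Proof. by rewrite /a memZ0. Qed.

Lemma big_ord_last (N : nat) (g : nat -> int) :
  (0 < N)%N -> \sum_(i < N) g i = \sum_(i < N.-1) g i + g N.-1.
Proof. by case: N => // N _; rewrite big_ord_recr. Qed.

Lemma sum1D n (F : S4 -> int) (A1 A2 : {set 'I_n}) B :
  (n < B)%N -> (0 < n)%N -> F (false, false, false, false) = 0 ->
  \sum_(x < B) F (st A1 A2 x%:Z) =
  F (false, a A1 0, false, a A2 0)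
  + \sum_(m < n.-1) F (a A1 m, a A1 m.+1, a A2 m, a A2 m.+1)
  + F (a A1 n.-1, false, a A2 n.-1, false).
Proof.
move=> hB hn F0.
rewrite -(subnKC hB) big_split_ord /=.
rewrite [X in _ + X]big1 ?addr0; last first.
  by move=> i _; rewrite addSn stS !a_out ?F0 //; lia.
rewrite big_ord_recl /= st0 -addrA; congr (_ + _).
rewrite (eq_bigr (fun i : 'I_n => F (st A1 A2 (i.+1)%:Z))); last by move=> i _; rewrite /bump.
rewrite (big_ord_last (fun i => F (st A1 A2 (i.+1)%:Z))) //.
rewrite stS prednK // !(a_out _ (leqnn n)); congr (_ + _).
by apply: eq_bigr => i _; rewrite stS.
Qed.

Definition cnt (f : nat -> bool) N p q : nat :=
  \sum_(m < N) ((f m == p) && (f m.+1 == q)).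

Lemma sum2bit (f : nat -> bool) N (K : bool -> bool -> int) :
  \sum_(m < N) K (f m) (f m.+1) =
    K false false * (cnt f N false false)%:Z + K false true * (cnt f N false true)%:Z
  + K true false * (cnt f N true false)%:Z + K true true * (cnt f N true true)%:Z.
Proof.
rewrite /cnt !PoszS !big_distrr -!big_split /=; apply: eq_bigr => m _.
by case: (f m); case: (f m.+1); rewrite /= ?mulr0 ?mulr1 ?addr0 ?add0r.
Qed.

Lemma cnt_ends (f : nat -> bool) N :
  (f N + cnt f N true false = f 0 + cnt f N false true)%N.
Proof.
elim: N => [|N IH]; first by rewrite /cnt !big_ord0.
move: IH; rewrite /cnt !big_ord_recr /=.
by case: (f N); case: (f N.+1); case: (f 0) => /=; lia.
Qed.

Definition rr n (A : {set 'I_n}) : nat := (a A 0 + cnt (a A) n.-1 false true)%N.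

Lemma mid1 n (F : S4 -> int) (T : {set 'I_n}) :
  \sum_(m < n.-1) F (a [set: 'I_n] m, a [set: 'I_n] m.+1, a T m, a T m.+1)
  = \sum_(m < n.-1) F (true, true, a T m, a T m.+1).
Proof.
apply: eq_bigr => m _; rewrite !aT.
have h := ltn_ord m; have -> : (m < n)%N by lia.
by have -> : (m.+1 < n)%N by lia.
Qed.

Lemma mid2 n (F : S4 -> int) (T : {set 'I_n}) :
  \sum_(m < n.-1) F (a T m, a T m.+1, a [set: 'I_n] m, a [set: 'I_n] m.+1)
  = \sum_(m < n.-1) F (a T m, a T m.+1, true, true).
Proof.
apply: eq_bigr => m _; rewrite !aT.
have h := ltn_ord m; have -> : (m < n)%N by lia.
by have -> : (m.+1 < n)%N by lia.
Qed.

Lemma G0l be : G (false, false, false, false) be = 0.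
Proof. by case: be => [[[[] []] []] []]. Qed.
Lemma G0r al : G al (false, false, false, false) = 0.
Proof. by case: al => [[[[] []] []] []]. Qed.

Lemma iface_odd n (A T : {set 'I_n}) B : (n < B)%N -> (0 < n)%N ->
  \sum_(x < B) \sum_(y < B) G (st [set: 'I_n] T x%:Z) (st A [set: 'I_n] y%:Z)
  = (rr A)%:Z + (rr T)%:Z - 2 * (rr A)%:Z * (rr T)%:Z.
Proof.
move=> hB hn.
have Hy : forall al, \sum_(y < B) G al (st A [set: 'I_n] y%:Z) =
   G al (false, a A 0, false, true)
   + (G al (false, false, true, true) * (cnt (a A) n.-1 false false)%:Z
    + G al (false, true, true, true) * (cnt (a A) n.-1 false true)%:Z
    + G al (true, false, true, true) * (cnt (a A) n.-1 true false)%:Z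
    + G al (true, true, true, true) * (cnt (a A) n.-1 true true)%:Z)
   + G al (a A n.-1, false, true, false).
  move=> al; rewrite (@sum1D n (G al)) ?G0r // mid2 (sum2bit (a A) n.-1 (fun p q => G al (p, q, true, true))).
  by rewrite !aT hn prednK ?leqnn.
rewrite (@sum1D n (fun al => \sum_(y < B) G al (st A [set: 'I_n] y%:Z))) //.
rewrite (mid1 (fun al => \sum_(y < B) G al (st A [set: 'I_n] y%:Z))) (sum2bit (a T) n.-1 (fun p q => \sum_(y < B) G (true, true, p, q) (st A [set: 'I_n] y%:Z))).
rewrite !Hy !aT hn prednK ?leqnn //.
have eA := cnt_ends (a A) n.-1; have eT := cnt_ends (a T) n.-1.
rewrite /rr.
move: eA eT.
case: (a A 0); case: (a A n.-1); case: (a T 0); case: (a T n.-1);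
move: (cnt (a A) n.-1 false false) (cnt (a A) n.-1 false true) (cnt (a A) n.-1 true false) (cnt (a A) n.-1 true true)
  (cnt (a T) n.-1 false false) (cnt (a T) n.-1 false true) (cnt (a T) n.-1 true false) (cnt (a T) n.-1 true true)
  => a00 a01 a10 a11 t00 t01 t10 t11 /= eA eT;
rewrite /G /Gb /allsame /b2z /=.
all: nia.
Qed.

Lemma iface_even n (A T : {set 'I_n}) B : (n < B)%N -> (0 < n)%N ->
  \sum_(x < B) \sum_(y < B) G (st A [set: 'I_n] x%:Z) (st [set: 'I_n] T y%:Z)
  = (rr A)%:Z + (rr T)%:Z - 2 * (rr A)%:Z * (rr T)%:Z.
Proof.
move=> hB hn.
have Hy : forall al, \sum_(y < B) G al (st [set: 'I_n] T y%:Z) =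
   G al (false, true, false, a T 0)
   + (G al (true, true, false, false) * (cnt (a T) n.-1 false false)%:Z
    + G al (true, true, false, true) * (cnt (a T) n.-1 false true)%:Z
    + G al (true, true, true, false) * (cnt (a T) n.-1 true false)%:Z
    + G al (true, true, true, true) * (cnt (a T) n.-1 true true)%:Z)
   + G al (true, false, a T n.-1, false).
  move=> al; rewrite (@sum1D n (G al)) ?G0r // mid1 (sum2bit (a T) n.-1 (fun p q => G al (true, true, p, q))).
  by rewrite !aT hn prednK ?leqnn.
rewrite (@sum1D n (fun al => \sum_(y < B) G al (st [set: 'I_n] T y%:Z))) //.
rewrite (mid2 (fun al => \sum_(y < B) G al (st [set: 'I_n] T y%:Z))) (sum2bit (a A) n.-1 (fun p q => \sum_(y < B) G (p, q, true, true) (st [set: 'I_n] T y%:Z))).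
rewrite !Hy !aT hn prednK ?leqnn //.
have eA := cnt_ends (a A) n.-1; have eT := cnt_ends (a T) n.-1.
rewrite /rr.
move: eA eT.
case: (a A 0); case: (a A n.-1); case: (a T 0); case: (a T n.-1);
move: (cnt (a A) n.-1 false false) (cnt (a A) n.-1 false true) (cnt (a A) n.-1 true false) (cnt (a A) n.-1 true true)
  (cnt (a T) n.-1 false false) (cnt (a T) n.-1 false true) (cnt (a T) n.-1 true false) (cnt (a T) n.-1 true true)
  => a00 a01 a10 a11 t00 t01 t10 t11 /= eA eT;
rewrite /G /Gb /allsame /b2z /=.
all: nia.
Qed.



Definition prevL n (Q : config n) (z : nat) : {set 'I_n} :=
  if z is m.+1 then nth set0 Q m else set0.

Lemma zpred (m : nat) : m.+1%:Z - 1 = m%:Z.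
Proof. by rewrite -addn1 PoszD addrK. Qed.

Lemma layer_odd n (Q : config n) (z : nat) : odd z ->
  [/\ LX Q z%:Z = nth set0 Q z, LY Q z%:Z = setT, LX Q (z%:Z - 1) = setT
    & LY Q (z%:Z - 1) = prevL Q z].
Proof.
case: z => // m /= hm; rewrite zpred /LX /LY /Lz /= hm /=.
by rewrite (negbTE hm); split.
Qed.

Lemma layer_even n (Q : config n) (z : nat) : ~~ odd z ->
  [/\ LX Q z%:Z = setT, LY Q z%:Z = nth set0 Q z, LX Q (z%:Z - 1) = prevL Q z
    & LY Q (z%:Z - 1) = setT].
Proof.
case: z => [|m] /= hm; first by rewrite /LX /LY /Lz /=.
rewrite zpred /LX /LY /Lz /= (negbNE hm) /=.
by [].
Qed.

Lemma slice n (Q : config n) (z : nat) B : (n < B)%N -> (0 < n)%N ->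
  \sum_(x < B) \sum_(y < B) Psi Q x%:Z y%:Z z%:Z =
  (rr (prevL Q z))%:Z + (rr (nth set0 Q z))%:Z - 2 * (rr (prevL Q z))%:Z * (rr (nth set0 Q z))%:Z.
Proof.
move=> hB hn.
under eq_bigr do under eq_bigr do rewrite Psi_G.
case: (boolP (odd z)) => hz.
  case: (layer_odd Q hz) => -> -> -> ->.
  exact: iface_odd.
case: (layer_even Q hz) => -> -> -> ->.
exact: iface_even.
Qed.

Lemma chi_slices n (Q : config n) : (0 < n)%N ->
  euler_char Q = \sum_(z < (n + size Q).+1)
   ((rr (prevL Q z))%:Z + (rr (nth set0 Q z))%:Z - 2 * (rr (prevL Q z))%:Z * (rr (nth set0 Q z))%:Z).
Proof.
move=> hn; rewrite euler_Psi.
under eq_bigr do rewrite exchange_big /=.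
rewrite exchange_big /=.
apply: eq_bigr => z _; apply: slice => //; lia.
Qed.

Lemma rr0 n : rr (set0 : {set 'I_n}) = 0%N.
Proof.
rewrite /rr a0 /= /cnt big1 // => m _.
by rewrite !a0.
Qed.

Lemma rrT n : (0 < n)%N -> rr (setT : {set 'I_n}) = 1%N.
Proof.
move=> hn; rewrite /rr aT hn /cnt big1 // => m _.
rewrite !aT; have := ltn_ord m; move=> h.
by have -> : (m < n)%N by lia.
Qed.

Lemma a_ord n (A : {set 'I_n}) (i : 'I_n) : a A i = (i \in A).
Proof.
rewrite /a /memZ; apply/existsP/idP => [[s /andP[sA /eqP e]]|iA].
  by have -> : i = s by apply: val_inj; case: e.
by exists i; rewrite iA eqxx.
Qed.

Lemma card_a n (A : {set 'I_n}) : #|A| = (\sum_(m < n) a A m)%N.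
Proof.
rewrite -sum1_card big_mkcond /=; apply: eq_bigr => i _.
by rewrite a_ord; case: (i \in A).
Qed.

Lemma rr_card n (A : {set 'I_n}) : (0 < n)%N -> (rr A <= #|A|)%N.
Proof.
move=> hn; rewrite card_a /rr.
case: n hn A => // n _ A /=.
rewrite big_ord_recl /= leq_add2l /cnt.
apply: leq_sum => i _.
rewrite /bump /= add1n.
by case: (a A i); case: (a A i.+1).
Qed.

Lemma rr_half n (A : {set 'I_n}) : (0 < n)%N -> (2 * rr A <= n + 1)%N.
Proof.
move=> hn.
have e := cnt_ends (a A) n.-1.
have h : (cnt (a A) n.-1 true false + cnt (a A) n.-1 false true <= n.-1)%N.
  rewrite /cnt -big_split /=.
  rewrite -[X in (_ <= X)%N]card_ord -sum1_card.
  apply: leq_sum => i _.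
  by case: (a A i); case: (a A i.+1).
move: e h; rewrite /rr.
case: (a A 0); case: (a A n.-1) => /=; lia.
Qed.

Lemma telesc (R : nat -> int) p :
  R 0%N + \sum_(z < p) (R z + R z.+1 - 2 * R z * R z.+1)
  = R p + 2 * \sum_(z < p) (R z - R z * R z.+1).
Proof.
elim: p => [|p IH]; first by rewrite !big_ord0; ring.
rewrite big_ord_recr addrA IH big_ord_recr /=; ring.
Qed.

Definition Rp (R : nat -> int) (z : nat) : int := if z is m.+1 then R m else 0.

Lemma chi_seq (R : nat -> int) p B :
  (p + 4 <= B)%N -> R p.+1 = 1 -> (forall z, (p + 3 <= z)%N -> R z = 0) ->
  \sum_(z < B) (Rp R z + R z - 2 * Rp R z * R z)
  = 2 - 2 * \sum_(z < p) (R z * R z.+1 - R z).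
Proof.
move=> hB h1 h0.
case: B hB => [|B] hB; first by lia.
rewrite big_ord_recl /=.
rewrite (eq_bigr (fun z : 'I_B => R z + R z.+1 - 2 * R z * R z.+1)); last by move=> i _.
have hB' : (p + 3 <= B)%N by lia.
rewrite -(subnKC hB') big_split_ord /=.
rewrite [X in _ + (_ + X)]big1 ?addr0; last first.
  move=> i _; rewrite (h0 (p + 3 + i)%N) ?leq_addr // (h0 (p + 3 + i).+1); first ring.
  lia.
have -> : (p + 3 = p.+2.+1)%N by lia.
rewrite !big_ord_recr /= h1 (h0 p.+3); last by lia.
have T := telesc R p.
have -> : \sum_(z < p) (R z * R z.+1 - R z) = - \sum_(z < p) (R z - R z * R z.+1).
  by rewrite -sumrN; apply: eq_bigr => i _; ring.
move: T; set S := \sum_(i < p) _; set X := \sum_(i < p) _ => T.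
lia.
Qed.

Definition RQ n (Q : config n) (z : nat) : int := (rr (nth set0 Q z))%:Z.

Lemma genus_formula n (Q : config n) : (0 < n)%N -> (3 <= size Q)%N ->
  nth set0 Q (size Q - 2) = setT ->
  genus Q = \sum_(z < size Q - 3) (RQ Q z * RQ Q z.+1 - RQ Q z).
Proof.
move=> hn hs hT.
rewrite /genus chi_slices //.
rewrite (eq_bigr (fun z : 'I_(n + size Q).+1 => Rp (RQ Q) z + RQ Q z - 2 * Rp (RQ Q) z * RQ Q z)); last first.
  by move=> [[|m] hm] _ /=; rewrite /Rp /RQ ?rr0.
rewrite (@chi_seq (RQ Q) (size Q - 3)).
- by rewrite opprB addrC subrK mulKz.
- lia.
- by rewrite /RQ -subSn ?subSS ?hT ?rrT //; lia.
- by move=> z hz; rewrite /RQ nth_default ?rr0 //; lia.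
Qed.

Lemma term_bound (R R' s m : int) : 0 <= R -> R <= s -> 2 * R' <= m + 1 -> 1 <= m ->
  2 * (R * R' - R) <= (m - 1) * s.
Proof. move=> *; nia. Qed.

Lemma final_bound n k (Q : config n) : odd n -> (3 <= n)%N -> (3 <= size Q)%N ->
  nth set0 Q (size Q - 2) = setT ->
  (\sum_(z < size Q - 3) #|nth set0 Q z| <= n * (k - 2))%N ->
  genus Q <= ((n * (n - 1) * (k - 2)) %/ 2)%N%:Z.
Proof.
move=> hodd hn hs hT hsum.
rewrite genus_formula //; last by lia.
set p := (size Q - 3)%N in hsum *.
have h2 : 2 * \sum_(z < p) (RQ Q z * RQ Q z.+1 - RQ Q z)
          <= (n%:Z - 1) * (\sum_(z < p) #|nth set0 Q z|)%N%:Z.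
  rewrite PoszS mulr_sumr mulr_sumr; apply: ler_sum => z _.
  apply: term_bound.
  - by rewrite /RQ.
  - by rewrite /RQ lez_nat rr_card //; lia.
  - have := rr_half (nth set0 Q z.+1); rewrite /RQ.
    move=> h; have {h} h := h ltac:(lia).
    by rewrite -PoszM -addn1 PoszD /= lez_nat in h *; lia.
  - by rewrite lez_nat; lia.
have [q hq] : exists q, n = (2 * q).+1.
  by exists n./2; rewrite -{1}(odd_double_half n) hodd -mul2n.
have -> : (n * (n - 1) * (k - 2) %/ 2 = n * q * (k - 2))%N.
  rewrite hq; have -> : ((2 * q).+1 - 1 = 2 * q)%N by lia.
  by rewrite mulnCA -!mulnA mulKn // mulnA.
move: h2 hsum; set X := \sum_(z < p) _; set S := (\sum_(z < p) _)%N.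
rewrite hq => h2 hS.
have h3 : (2 * q * S <= 2 * q * ((2 * q).+1 * (k - 2)))%N by rewrite leq_mul2l hS orbT.
have e1 : ((2 * q).+1%:Z - 1) = (2 * q)%N%:Z by rewrite -addn1 PoszD addrK.
rewrite e1 -PoszM in h2.
have h4 : 2 * X <= (2 * q * ((2 * q).+1 * (k - 2)))%N%:Z.
  by apply: (le_trans h2); rewrite lez_nat.
have e2 : (2 * q * ((2 * q).+1 * (k - 2)) = 2 * ((2 * q).+1 * q * (k - 2)))%N.
  nia.
rewrite e2 in h4; move: h4; set N := ((2 * q).+1 * q * (k - 2))%N.
move=> h4; lia.
Qed.


Theorem mainTheorem6 (n k : nat) (Q : config n) :
  odd n -> (3 <= n)%N -> (3 <= k)%N -> jenga_like k Q ->
  genus Q <= ((n * (n - 1) * (k - 2)) %/ 2)%N%:Z.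
Proof.
move=> ho hn hk [hr _].
have [hs _ htop hpre] := reach_Inv hk hr.
exact: final_bound.
Qed.
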